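(* Let $D$ be a BN distribution on $\{0,1\}^n$ with all conditional probabilities in $(0,1)$, whose variable order $1,\dots,n$ is a topological order of the DAG, and let $f:\{0,1\}^n\to\mathbb{R}$. Fix $0\le k\le n$ and $\alpha\in\{0,1\}^k$. For every $u\in\{0,1\}^{n-k}$, letting $Y=(X_{n-k+1},\dots,X_n)$, $$g_\alpha(u)=\mathbb{E}\big[f(uY)\,\phi_{0^{n-k}\alpha}(uY)\;\big|\;(X_1,\dots,X_{n-k})=u\big],$$ where $X\sim D$.
   Context: A Bayesian network (BN) on binary variables $X_1,\dots,X_n$ is a directed acyclic graph on $[n]$ with parent sets $\operatorname{pa}(v)$ and conditional distributions with $P(X_1,\dots,X_n)=\prod_v P(X_v\mid X_{\operatorname{pa}(v)})$. Let $\mu_{v,x_{\operatorname{pa}(v)}}=P(X_v=1\mid X_{\operatorname{pa}(v)}=x_{\operatorname{pa}(v)})$, $\sigma_{v,x_{\operatorname{pa}(v)}}=\sqrt{\mu_{v,x_{\operatorname{pa}(v)}}(1-\mu_{v,x_{\operatorname{pa}(v)}})}$, $\phi_v(x)=(x_v-\mu_{v,x_{\operatorname{pa}(v)}})/\sigma_{v,x_{\operatorname{pa}(v)}}$, $\phi_S=\prod_{v\in S}\phi_v$, and $\hat f_S=\mathbb{E}_D[f(X)\phi_S(X)]$. Sets $S\subseteq[n]$ are identified with strings $\gamma\in\{0,1\}^n$ via $\gamma_i=1\iff i\in S$, and we write $\phi_\gamma,\hat f_\gamma$ accordingly. For $\beta\in\{0,1\}^{n-k}$ and $\alpha\in\{0,1\}^k$,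 $\beta\alpha\in\{0,1\}^n$ is their concatenation ($\beta$ occupies coordinates $1,\dots,n-k$); $0^m$ is the all-zero string of length $m$; for $u\in\{0,1\}^{n-k}$ and $y\in\{0,1\}^k$, $uy\in\{0,1\}^n$ is the concatenated input. Define $g_\alpha(u)=\sum_{\beta\in\{0,1\}^{n-k}}\hat f_{\beta\alpha}\,\phi_{\beta0^k}(u0^k)$ for $u\in\{0,1\}^{n-k}$ (note $\phi_{\beta 0^k}(x)$ depends only on $x_1,\dots,x_{n-k}$ since the order is topological). *)

(* Defs.v *)
From HB Require Import structures.
From mathcomp Require Import all_boot all_order all_algebra.
Set Implicit Arguments. Unset Strict Implicit. Unset Printing Implicit Defensive.
Import Order.TTheory GRing.Theory Num.Theory.
Local Open Scope ring_scope.

(* Bit strings of length m: {ffun 'I_m -> bool}; coordinate i (0-based) is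
   coordinate i+1 of the paper. *)
Definition bits (m : nat) := {ffun 'I_m -> bool}.

Definition getb (m : nat) (u : bits m) (j : nat) : bool :=
  if insub j is Some o then u o else false.

Definition catb (n k : nat) (u : bits (n - k)) (y : bits k) : bits n :=
  [ffun i : 'I_n => if (i < n - k)%N then getb u i else getb y (i - (n - k))].

Definition prefixb (n k : nat) (x : bits n) : bits (n - k) :=
  [ffun i : 'I_(n - k) => getb x i].
Definition suffixb (n k : nat) (x : bits n) : bits k :=
  [ffun i : 'I_k => getb x (i + (n - k))].

Definition zerob (m : nat) : bits m := [ffun _ => false].

Section BN.
Variables (R : rcfType) (n : nat).
(* mu v x = mu_{v, x_{pa(v)}} = P(X_v = 1 | X_{pa(v)} = x_{pa(v)}) *)
Variable mu : 'I_n -> bits n -> R.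

Definition is_BN (pa : 'I_n -> {set 'I_n}) : Prop :=
  (forall v j, j \in pa v -> (j < v)%N) /\
  (forall v (x y : bits n), (forall j, j \in pa v -> x j = y j) -> mu v x = mu v y).

Definition BNprob (x : bits n) : R :=
  \prod_(v < n) (if x v then mu v x else 1 - mu v x).

Definition sigmav (v : 'I_n) (x : bits n) : R := Num.sqrt (mu v x * (1 - mu v x)).

Definition phiv (v : 'I_n) (x : bits n) : R :=
  ((x v)%:R - mu v x) / sigmav v x.

Definition phi (gamma : bits n) (x : bits n) : R :=
  \prod_(v < n | gamma v) phiv v x.

Definition fhat (f : bits n -> R) (gamma : bits n) : R :=
  \sum_(x : bits n) BNprob x * (f x * phi gamma x).

Definition condE (h : bits n -> R) (E : pred (bits n)) : R :=
  (\sum_(x : bits n | E x) BNprob x * h x) / (\sum_(x : bits n | E x) BNprob x).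

Definition g_alpha (f : bits n -> R) (k : nat) (alpha : bits k) (u : bits (n - k)) : R :=
  \sum_(beta : bits (n - k))
     fhat f (catb beta alpha) * phi (catb beta (zerob k)) (catb u (zerob k)).
End BN.

(* Main.v *)
Require Import Defs.
From HB Require Import structures.
From mathcomp Require Import all_boot all_order all_algebra.
From mathcomp Require Import zify ring lra.
Import Order.TTheory GRing.Theory Num.Theory.
Local Open Scope ring_scope.

Lemma getb_ord m (u : bits m) (i : 'I_m) : getb u i = u i.
Proof. by rewrite /getb valK. Qed.

Arguments getb_ord {m}.

Lemma getb_lt m (u : bits m) j (h : (j < m)%N) : getb u j = u (Ordinal h).
Proof. by rewrite /getb insubT. Qed.

Lemma getb_ge m (u : bits m) j : (m <= j)%N -> getb u j = false.
Proof. by move=> h; rewrite /getb insubF // ltnNge h. Qed.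

Lemma getb_zero m j : getb (zerob m) j = false.
Proof. by rewrite /getb; case: insub => // o; rewrite ffunE. Qed.

Lemma catbK n k (hk : (k <= n)%N) (u : bits (n - k)) (x : bits n) :
  @prefixb n k x = u -> catb u (@suffixb n k x) = x.
Proof.
move=> <-; apply/ffunP => i; rewrite ffunE.
case: ifP => hi.
  by rewrite (getb_lt _ _ _ hi) ffunE getb_ord.
have hi' : (i - (n - k) < k)%N by have := ltn_ord i; lia.
rewrite (getb_lt _ _ _ hi') ffunE /= subnK; last by lia.
by rewrite getb_ord.
Qed.

Definition fac (R : rcfType) n (mu : 'I_n -> bits n -> R) (v : 'I_n) (x : bits n) : R :=
  if x v then mu v x else 1 - mu v x.

Definition agree n (t : nat) (x0 y : bits n) := [forall i : 'I_n, (i < t)%N ==> (y i == x0 i)].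

Arguments agree {n}.
Arguments fac {R n}.

Lemma mu_agree (R : rcfType) n (mu : 'I_n -> bits n -> R) pa :
  is_BN mu pa -> forall (v : 'I_n) (x y : bits n), (forall j : 'I_n, (j < v)%N -> x j = y j) -> mu v x = mu v y.
Proof. by case=> h1 h2 v x y h; apply: h2 => j /h1; apply: h. Qed.
Lemma sumout (R : rcfType) n (mu : 'I_n -> bits n -> R) pa :
  is_BN mu pa -> forall d t, (t + d = n)%N -> forall x0 : bits n,
  \sum_(y : bits n | agree t x0 y) \prod_(v : 'I_n | (t <= v)%N) fac mu v y = 1.
Proof.
move=> hBN d; elim: d => [|d IH] t htd x0.
  rewrite addn0 in htd; subst t.
  rewrite (eq_bigr (fun _ => 1)); last first.
    by move=> y _; rewrite big_pred0 // => v; rewrite leqNgt ltn_ord.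
  rewrite (eq_bigl (fun y => y == x0)) ?big_pred1_eq // => y /=.
  apply/forallP/eqP => [h|->]; last by move=> i; rewrite eqxx implybT.
  by apply/ffunP=> i; move: (h i); rewrite ltn_ord => /eqP.
have ht : (t < n)%N by lia.
set tt := Ordinal ht.
pose x1 (b : bool) : bits n := [ffun i => if i == tt then b else x0 i].
have claim : forall b : bool,
  \sum_(y : bits n | agree t x0 y && (y tt == b)) \prod_(v : 'I_n | (t <= v)%N) fac mu v y
   = (if b then mu tt x0 else 1 - mu tt x0).
  move=> b.
  rewrite (eq_bigl (agree t.+1 (x1 b))); last first.
    move=> y; rewrite /agree; apply/idP/idP => [/andP [/forallP h1 /eqP h2]|/forallP h]; first apply/forallP => i.
      apply/implyP => hi; rewrite ffunE.
      case: (i =P tt) => [->|hne]; first by rewrite h2.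
      have hi' : (i < t)%N.
        rewrite ltn_neqAle -ltnS hi andbT; apply/eqP => e; apply: hne; exact: val_inj.
      by move: (h1 i); rewrite hi'.
    apply/andP; split; last by move: (h tt); rewrite /= ltnS leqnn /= ffunE eqxx.
    apply/forallP => i; apply/implyP => hi; move: (h i).
    rewrite ltnS (ltnW hi) /= ffunE.
    have -> : (i == tt) = false by rewrite -(inj_eq val_inj) /= ltn_eqF.
    by [].
  rewrite (eq_bigr (fun y => (if b then mu tt x0 else 1 - mu tt x0) *
              \prod_(v : 'I_n | (t.+1 <= v)%N) fac mu v y)); last first.
    move=> y /forallP hy.
    rewrite (bigD1 tt) /= ?leqnn //.
    have hyt : y tt = b by move: (hy tt); rewrite /= ltnS leqnn /= ffunE eqxx => /eqP.
    have hmu : mu tt y = mu tt x0.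
      apply: (mu_agree _ _ _ _ hBN) => j hj; move: (hy j); rewrite /= ltnS (ltnW hj) /= ffunE.
      have -> : (j == tt) = false by rewrite -(inj_eq val_inj) /= ltn_eqF.
      by move/eqP.
    congr (_ * _); first by rewrite /fac hyt hmu.
    apply: eq_bigl => v; rewrite [in RHS]ltn_neqAle andbC; congr (_ && _).
    by rewrite -(inj_eq val_inj) /= eq_sym.
  by rewrite -mulr_sumr IH ?mulr1 //; lia.
rewrite (bigID (fun y : bits n => y tt)) /=.
rewrite (eq_bigl (fun y => agree t x0 y && (y tt == true))); last by move=> y; rewrite eqb_id.
rewrite claim.
rewrite (eq_bigl (fun y => agree t x0 y && (y tt == false))); last by move=> y; rewrite eqbF_neg.
by rewrite claim addrC subrK.
Qed.

Lemma prefix_agree n k (hk : (k <= n)%N) (u : bits (n - k)) (x : bits n) :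
  (@prefixb n k x == u) = agree (n - k) (catb u (zerob k)) x.
Proof.
apply/eqP/forallP => [<- i | h].
  apply/implyP => hi; rewrite !ffunE hi (getb_lt _ _ _ hi) ffunE getb_ord.
  by [].
apply/ffunP => j; rewrite ffunE.
have -> : getb x j = x (widen_ord (leq_subr k n) j) := getb_ord x (widen_ord (leq_subr k n) j).
move: (h (widen_ord (leq_subr k n) j)); rewrite /= ltn_ord /= ffunE /= ltn_ord => /eqP ->.
exact: getb_ord.
Qed.

Arguments prefix_agree {n k}.

Lemma marginal (R : rcfType) n (mu : 'I_n -> bits n -> R) pa (hBN : is_BN mu pa)
  k (hk : (k <= n)%N) (u : bits (n - k)) :
  \sum_(x : bits n | @prefixb n k x == u) BNprob mu x =
  \prod_(v : 'I_n | (v < n - k)%N) fac mu v (catb u (zerob k)).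
Proof.
rewrite (eq_bigl _ _ (fun x => prefix_agree hk u x)).
rewrite (eq_bigr (fun x => \prod_(v : 'I_n | (v < n - k)%N) fac mu v (catb u (zerob k)) *
   \prod_(v : 'I_n | (n - k <= v)%N) fac mu v x)); last first.
  move=> x /forallP hx.
  rewrite /BNprob (bigID (fun v : 'I_n => (v < n - k)%N)) /=; congr (_ * _).
    apply: eq_bigr => v hv.
    have xv : x v = catb u (zerob k) v by move: (hx v); rewrite hv => /eqP.
    have mv : mu v x = mu v (catb u (zerob k)).
      apply: (mu_agree _ _ _ _ hBN) => j hj.
      by move: (hx j); rewrite (ltn_trans hj hv) => /eqP.
    by rewrite /fac xv mv.
  by apply: eq_bigl => v; rewrite -leqNgt.
by rewrite -mulr_sumr (sumout _ _ _ _ hBN k (n - k)) ?mulr1 // subnK.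
Qed.

Lemma phi_split (R : rcfType) n (mu : 'I_n -> bits n -> R) k (beta : bits (n - k))
   (alpha : bits k) (x : bits n) :
  phi mu (catb beta alpha) x =
  phi mu (catb beta (zerob k)) x * phi mu (catb (zerob (n - k)) alpha) x.
Proof.
rewrite /phi (bigID (fun v : 'I_n => (v < n - k)%N)) /=; congr (_ * _);
 apply: eq_bigl => v; rewrite !ffunE; case: ifP => hv /=;
 by rewrite ?getb_zero ?andbT ?andbF.
Qed.

Lemma complete (R : rcfType) n (mu : 'I_n -> bits n -> R) k (hk : (k <= n)%N)
   (x y : bits n) :
  \sum_(beta : bits (n - k)) phi mu (catb beta (zerob k)) x * phi mu (catb beta (zerob k)) y
  = \prod_(v : 'I_n | (v < n - k)%N) (1 + phiv mu v x * phiv mu v y).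
Proof.
pose a := fun v : 'I_n => phiv mu v x * phiv mu v y.
have E : forall beta : bits (n - k),
  phi mu (catb beta (zerob k)) x * phi mu (catb beta (zerob k)) y =
  \prod_(i < n - k) (if beta i then a (widen_ord (leq_subr k n) i) else 1).
  move=> beta; rewrite /phi -big_split /=.
  rewrite (eq_bigl (fun v : 'I_n => (v < n - k)%N && getb beta v)); last first.
    by move=> v; rewrite ffunE; case: ifP => //; rewrite getb_zero.
  rewrite big_mkcondr (big_ord_narrow (leq_subr k n)); apply: eq_bigr => i _.
  have -> : getb beta (widen_ord (leq_subr k n) i) = beta i := getb_ord beta i.
  by [].
rewrite (eq_bigr _ (fun beta _ => E beta)).
rewrite -(bigA_distr_bigA (fun (i : 'I_(n - k)) (b : bool) =>
   if b then a (widen_ord (leq_subr k n) i) else 1)).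
rewrite (big_ord_narrow (leq_subr k n)); apply: eq_bigr => i _.
by rewrite big_bool /= addrC.
Qed.

Arguments marginal {R n mu pa} hBN {k} hk u.
Arguments phi_split {R n} mu {k}.
Arguments complete {R n} mu {k} hk.

Lemma kern_eq (R : rcfType) n (mu : 'I_n -> bits n -> R) pa (hBN : is_BN mu pa)
   (hmu : forall v x, 0 < mu v x < 1) m (x y : bits n) :
  (forall i : 'I_n, (i < m)%N -> x i = y i) ->
  \prod_(v : 'I_n | (v < m)%N) (1 + phiv mu v x * phiv mu v y) =
  (\prod_(v : 'I_n | (v < m)%N) fac mu v y)^-1.
Proof.
move=> hxy; rewrite -prodfV; apply: eq_bigr => v hv.
have xv : x v = y v by apply: hxy.
have mv : mu v x = mu v y.
  by apply: (mu_agree _ _ _ _ hBN) => j hj; apply: hxy; apply: ltn_trans hj hv.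
rewrite /phiv /sigmav /fac xv mv.
have /andP [h0 h1] := hmu v y.
set c := mu v y.
have hc0 : c != 0 by rewrite gt_eqF.
have hc1 : 1 - c != 0 by rewrite gt_eqF // subr_gt0.
have hs : Num.sqrt (c * (1 - c)) ^+ 2 = c * (1 - c).
  by apply: sqr_sqrtr; apply: mulr_ge0; [exact: ltW | rewrite subr_ge0; exact: ltW].
rewrite mulf_div -!expr2 hs.
by case: (y v) => /=; rewrite ?mulr1n ?mulr0n; field; rewrite ?hc0 ?hc1 ?mulf_neq0 ?oppr_eq0.
Qed.

Arguments kern_eq {R n mu pa} hBN hmu {m x y}.

Lemma kern_neq (R : rcfType) n (mu : 'I_n -> bits n -> R) pa (hBN : is_BN mu pa)
   (hmu : forall v x, 0 < mu v x < 1) m (x y : bits n) (i0 : 'I_n) :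
  (i0 < m)%N -> x i0 != y i0 ->
  \prod_(v : 'I_n | (v < m)%N) (1 + phiv mu v x * phiv mu v y) = 0.
Proof.
move=> hi0 hne0.
pose P := fun j => (j < m)%N && (getb x j != getb y j).
have exP : exists j, P j by exists (val i0); rewrite /P !getb_ord hi0 hne0.
case: (ex_minnP exP) => j /andP [hjm hne] hmin.
have hjn : (j < n)%N by case: (ltnP j n) => // hh; move: hne; rewrite !getb_ge.
set v := Ordinal hjn.
rewrite (bigD1 v) //=.
suff -> : 1 + phiv mu v x * phiv mu v y = 0 by rewrite mul0r.
have mv : mu v x = mu v y.
  apply: (mu_agree _ _ _ _ hBN) => i hi.
  apply/eqP; apply/negPn/negP => hne'.
  have := hmin (val i); rewrite /P !getb_ord (ltn_trans hi hjm) hne' => /(_ isT).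
  by rewrite leqNgt hi.
have hxy : x v != y v by move: hne; rewrite (getb_lt _ _ _ hjn) (getb_lt _ _ _ hjn).
rewrite /phiv /sigmav mv.
have /andP [h0 h1] := hmu v y.
set c := mu v y.
have hc0 : c != 0 by rewrite gt_eqF.
have hc1 : 1 - c != 0 by rewrite gt_eqF // subr_gt0.
have hs : Num.sqrt (c * (1 - c)) ^+ 2 = c * (1 - c).
  by apply: sqr_sqrtr; apply: mulr_ge0; [exact: ltW | rewrite subr_ge0; exact: ltW].
rewrite mulf_div -!expr2 hs.
by move: hxy; case: (x v); case: (y v) => //= _; rewrite ?mulr1n ?mulr0n; field; rewrite ?hc0 ?hc1 ?mulf_neq0 ?oppr_eq0.
Qed.
Arguments kern_neq {R n mu pa} hBN hmu {m x y i0}.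

Theorem mainTheorem2 (R : rcfType) (n : nat) (pa : 'I_n -> {set 'I_n})
    (mu : 'I_n -> bits n -> R)
    (hBN : is_BN mu pa)
    (hmu : forall v x, 0 < mu v x < 1)
    (f : bits n -> R) (k : nat) (hk : (k <= n)%N) (alpha : bits k)
    (u : bits (n - k)) :
  g_alpha mu f alpha u =
  condE mu
    (fun x => f (catb u (@suffixb n k x)) *
              phi mu (catb (zerob (n - k)) alpha) (catb u (@suffixb n k x)))
    (fun x => @prefixb n k x == u).
Proof.
set u0 := catb u (zerob k).
set Q := \prod_(v : 'I_n | (v < n - k)%N) fac mu v u0.
rewrite /condE (marginal hBN hk u) -/u0 -/Q.
rewrite (eq_bigr (fun x => BNprob mu x * (f x * phi mu (catb (zerob (n - k)) alpha) x)));
  last by move=> x /eqP hx; rewrite (catbK _ _ hk _ _ hx).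
rewrite /g_alpha /fhat.
rewrite [LHS](eq_bigr (fun beta : bits (n - k) => \sum_(x : bits n)
   BNprob mu x * (f x * phi mu (catb beta alpha) x) * phi mu (catb beta (zerob k)) u0));
  last by move=> beta _; rewrite mulr_suml.
rewrite exchange_big /=.
rewrite (eq_bigr (fun x => BNprob mu x * (f x * phi mu (catb (zerob (n - k)) alpha) x) *
   \prod_(v : 'I_n | (v < n - k)%N) (1 + phiv mu v x * phiv mu v u0))); last first.
  move=> x _; rewrite -(complete mu hk) mulr_sumr; apply: eq_bigr => beta _.
  by rewrite (phi_split mu beta alpha); ring.
rewrite (eq_bigr (fun x => if @prefixb n k x == u then
     BNprob mu x * (f x * phi mu (catb (zerob (n - k)) alpha) x) * Q^-1 else 0)); last first.
  move=> x _; case: ifP => h.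
    congr (_ * _); rewrite /Q (kern_eq hBN hmu) //.
    by move: h; rewrite (prefix_agree hk) => /forallP hx i hi; move: (hx i); rewrite hi => /eqP.
  move/negbT: h; rewrite (prefix_agree hk) => /forallPn [i]; rewrite negb_imply => /andP [hi hne].
  by rewrite (kern_neq hBN hmu hi hne) mulr0.
by rewrite -big_mkcond /= -mulr_suml.
Qed.
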